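(* For every positive integer $k$, every graph $G\in\mathcal{G}_k$ is connected and cubic and satisfies $\alpha(G)=6k$ and $\mathrm{diss}(G)=10k$.
   Context: All graphs are finite; $\alpha(G)$ is the independence number; a set $D$ of vertices is a dissociation set if the induced subgraph $G[D]$ has maximum degree at most $1$, and $\mathrm{diss}(G)$ is the maximum order of a dissociation set. Let $K_4^*$ be the graph obtained from $K_4$ with vertices $a,b,c,d$ by subdividing the edge $ab$ twice, i.e. replacing $ab$ by a path $a\,x\,y\,b$ with new vertices $x,y$ (the subdivision vertices). For a positive integer $k$, $\mathcal{H}_k$ is the set of all connected multigraphs $H$ (parallel edges allowed, no loops) of maximum degree at most $3$ such that: (i) $3n_1+2n_2+n_3=6k$, where $n_i$ is the number of vertices of degree $i$ (degree = number of incident edges); (ii) $H$ has an induced matching $M$ with $|M|=k$ covering all vertices of degree $1$; (iii) $H-M$ has an orientation in which every vertex of $H$ not incident with an edge of $M$ has exactly two outgoing edges. $\mathcal{G}_k$ is the set of all graphs $G$ obtained from some $H\in\mathcal{H}_k$ by replacing each vertex $w$ of $H$ by a gadget $G_w$ with designated attachment vertices, one per edge of $H$ at $w$, and replacing each edge $ww'$ of $H$ by an edge joining the attachment vertex of $G_w$ assigned to this edge with the attachment vertex of $G_{w'}$ assigned to this edge (distinct edges of $H$ use distinct attachment vertices). The gadgets are: if $\deg_H(w)=3$, $G_w$ is a triangle and each of its three vertices is the attachment vertex for one of the three edges at $w$; if $\deg_H(w)=2$, $G_w$ is a copy of $K_4^*$ whose two subdivision vertices $x,y$ are the attachment vertices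 for the two edges at $w$; if $\deg_H(w)=1$, $G_w$ is one of the following two graphs on $9$ vertices $z,a_1,a_2,p_1,q_1,r_1,p_2,q_2,r_2$, with $z$ the attachment vertex: both have edges $za_1$, $za_2$, the triangles $p_1q_1r_1$ and $p_2q_2r_2$, and the edge $r_1r_2$; the first additionally has edges $a_1p_1,a_1q_1,a_2p_2,a_2q_2$, the second additionally has edges $a_1p_1,a_1q_2,a_2p_2,a_2q_1$. *)

(* Defs.v *)
From mathcomp Require Import all_boot.
Set Implicit Arguments. Unset Strict Implicit. Unset Printing Implicit Defensive.

Section SimpleGraph.
Variables (T : finType) (adj : rel T).

Definition sgraph_simple : Prop := irreflexive adj /\ symmetric adj.
Definition gconnected : Prop := forall x y : T, connect adj x y.
Definition cubic : Prop := forall x : T, #|[set y | adj x y]| = 3.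
Definition independent (S : {set T}) : bool :=
  [forall x in S, forall y in S, ~~ adj x y].
Definition dissociation (D : {set T}) : bool :=
  [forall x in D, #|[set y in D | adj x y]| <= 1].
Definition alpha : nat := \max_(S : {set T} | independent S) #|S|.
Definition diss : nat := \max_(D : {set T} | dissociation D) #|D|.
End SimpleGraph.

Section Multigraph.
Variables (V E : finType) (src tgt : E -> V).

Definition loopless : Prop := forall e, src e != tgt e.
Definition incident (w : V) (e : E) : bool := (src e == w) || (tgt e == w).
Definition hdeg (w : V) : nat := #|[set e | incident w e]|.
Definition joins (e : E) (u v : V) : bool :=
  ((src e == u) && (tgt e == v)) || ((src e == v) && (tgt e == u)).
Definition hadj : rel V := fun u v => [exists e, joins e u v].
Definition hconnected : Prop := forall u v : V, connect hadj u v.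
Definition ncount (i : nat) : nat := #|[set w | hdeg w == i]|.

Definition covered (M : {set E}) (w : V) : bool := [exists e in M, incident w e].
Definition induced_matching (M : {set E}) : Prop :=
  (forall e e', e \in M -> e' \in M -> e != e' ->
     forall w, ~~ (incident w e && incident w e')) /\
  (forall e, covered M (src e) -> covered M (tgt e) -> e \in M).

(* orientation o : true = oriented src -> tgt, false = tgt -> src *)
Definition outgoing (o : E -> bool) (w : V) (e : E) : bool :=
  if o e then src e == w else tgt e == w.

Definition in_Hk (k : nat) : Prop :=
  loopless /\ hconnected /\ (forall w, hdeg w <= 3) /\
  3 * ncount 1 + 2 * ncount 2 + ncount 3 = 6 * k /\
  exists M : {set E},
    [/\ induced_matching M, #|M| = k,
        (forall w, hdeg w = 1 -> covered M w) &
        exists o : E -> bool, forall w, ~~ covered M w ->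
          #|[set e | (e \notin M) && outgoing o w e]| = 2].
End Multigraph.

(* ---------- Gadgets (local vertices numbered in 'I_9) ----------
   deg 3: triangle on 0,1,2 (all attachment vertices).
   deg 2: K4* with a=0,b=1,c=2,d=3,x=4,y=5; attachment vertices x,y.
   deg 1: z=0,a1=1,a2=2,p1=3,q1=4,r1=5,p2=6,q2=7,r2=8; attachment z;
          variant b = true is the first graph, b = false the second. *)
Definition gsize (d : nat) : nat :=
  match d with 3 => 3 | 2 => 6 | 1 => 9 | _ => 0 end.

Definition attset (d : nat) : {set 'I_9} :=
  match d with
  | 3 => [set i : 'I_9 | i < 3]
  | 2 => [set i : 'I_9 | (nat_of_ord i == 4) || (nat_of_ord i == 5)]
  | 1 => [set i : 'I_9 | nat_of_ord i == 0]
  | _ => set0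
  end.

Definition gedges (d : nat) (b : bool) : seq (nat * nat) :=
  match d with
  | 3 => [:: (0,1); (1,2); (0,2)]
  | 2 => [:: (0,2); (0,3); (1,2); (1,3); (2,3); (0,4); (4,5); (5,1)]
  | 1 => [:: (0,1); (0,2); (3,4); (4,5); (3,5); (6,7); (7,8); (6,8); (5,8); (1,3); (2,6)]
         ++ (if b then [:: (1,4); (2,7)] else [:: (1,7); (2,4)])
  | _ => [::]
  end.

Definition gadj (d : nat) (b : bool) (i j : 'I_9) : bool :=
  ((nat_of_ord i, nat_of_ord j) \in gedges d b) ||
  ((nat_of_ord j, nat_of_ord i) \in gedges d b).

Section Construction.
Variables (V E : finType) (src tgt : E -> V).

Definition Gvert := {p : V * 'I_9 | p.2 < gsize (hdeg src tgt p.1)}.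

(* att w e = local vertex of G_w attached to edge e (meaningful for e incident to w) *)
Definition valid_attach (att : V -> E -> 'I_9) : Prop :=
  forall w : V,
    (forall e, incident src tgt w e -> att w e \in attset (hdeg src tgt w)) /\
    {in [pred e | incident src tgt w e] &, injective (att w)} /\
    attset (hdeg src tgt w) \subset [set att w e | e in [pred e | incident src tgt w e]].

Definition Gadj (att : V -> E -> 'I_9) (var : V -> bool) : rel Gvert :=
  fun u v =>
    let w := (val u).1 in let i := (val u).2 in
    let w' := (val v).1 in let j := (val v).2 in
    ((w == w') && gadj (hdeg src tgt w) (var w) i j) ||
    [exists e, joins src tgt e w w' && (att w e == i) && (att w' e == j)].
End Construction.

Arguments Gadj {V E} src tgt att var.
Arguments valid_attach {V E} src tgt att.
Arguments in_Hk {V E} src tgt k.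

(* Main.v *)
Require Import Defs.
From mathcomp Require Import all_boot zify.
Set Implicit Arguments. Unset Strict Implicit. Unset Printing Implicit Defensive.

Definition base (d : nat) : nat := match d with 1 => 4 | 2 => 2 | _ => 0 end.
Definition cc (d : nat) : nat := match d with 1 => 3 | 2 => 2 | 3 => 1 | _ => 0 end.
Definition I9 := iota 0 9.
Arguments I9 : simpl never.
Definition cnt (f : nat -> bool) := count f I9.
Definition gadjN d b (i j : nat) := ((i, j) \in gedges d b) || ((j, i) \in gedges d b).
Definition attN d n := match d with 3 => n < 3 | 2 => (n == 4) || (n == 5) | 1 => n == 0 | _ => false end.
Fixpoint allbl n : seq (seq bool) :=
  if n is n'.+1 then [seq b :: l | b <- [:: true; false], l <- allbl n'] else [:: [::]].
Definition ldegN d b (f : nat -> bool) i := cnt (fun j => f j && gadjN d b i j).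
Definition inrange d (f : nat -> bool) := all (fun n => f n ==> (n < gsize d)) I9.
Definition Pdiss d b (f : nat -> bool) :=
  (inrange d f && all (fun n => f n ==> (ldegN d b f n <= 1)) I9) ==>
  [&& cnt f <= base d + cnt (fun n => f n && attN d n), cnt (fun n => f n && attN d n) <= 2 &
     (2 <= cnt (fun n => f n && attN d n)) ==> all (fun n => (f n && attN d n) ==> (0 < ldegN d b f n)) I9].
Definition Pind d b (f : nat -> bool) :=
  (inrange d f && all (fun n => f n ==> all (fun m => f m ==> ~~ gadjN d b n m) I9) I9) ==>
  (cnt f <= cc d).
Definition baseN d n := match d with 1 => n \in [:: 3; 4; 6; 7] | 2 => n \in [:: 2; 3] | _ => false end.
Definition indN d n := match d with 1 => n \in [:: 1; 2; 5] | 2 => n \in [:: 0; 1] | _ => false end.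
Definition Pdlow d b (A : nat -> bool) :=
  (all (fun n => A n ==> attN d n) I9 && ((cnt A == 1) || ((cnt A == 2) && (d != 1)))) ==>
  let f := fun n => baseN d n || A n in
  all (fun n => f n ==> (ldegN d b f n <= 1)) I9 &&
  ((cnt A == 1) ==> all (fun n => A n ==> (ldegN d b f n == 0)) I9).
Definition chk (P : (nat -> bool) -> bool) := all (fun l => P (fun n => nth false l n)) (allbl 9).
Definition rk d i := nth 0 (match d with 3 => [:: 0; 1; 1] | 2 => [:: 0; 2; 1; 1; 1; 2]
   | _ => [:: 0; 1; 1; 2; 2; 3; 2; 2; 3] end) i.
Definition static d b :=
  [&& all (fun i => (i < gsize d) ==> (cnt (gadjN d b i) + attN d i == 3)) I9,
      all (fun i => all (fun j => gadjN d b i j ==> (j < gsize d)) I9) I9,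
      all (fun i => attN d i ==> (i < gsize d)) I9,
      all (fun i => ~~ gadjN d b i i) I9,
      all (fun i => ((i < gsize d) && (i != 0)) ==> has (fun j => gadjN d b i j && (rk d j < rk d i)) I9) I9,
      all (fun i => baseN d i ==> ((i < gsize d) && ~~ attN d i)) I9,
      cnt (baseN d) == base d &
      [&& inrange d (indN d), all (fun n => indN d n ==> all (fun m => indN d m ==> ~~ gadjN d b n m) I9) I9,
          all (fun n => indN d n ==> ~~ attN d n) I9 & (d == 3) || (cnt (indN d) == cc d)]].

Lemma allbl_mem n (l : seq bool) : size l = n -> l \in allbl n.
Proof.
elim: n l => [|n IH] [|x l] //= [Hs].
have := @allpairs_f _ _ _ (fun b l => b :: l) [:: true; false] (allbl n) x l.
by apply; [case: x | apply: IH].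
Qed.

Lemma chkP P (f : nat -> bool) : chk P -> P (fun n => nth false [seq f i | i <- I9] n) .
Proof. move=> /allP; apply; apply: allbl_mem; by rewrite size_map size_iota. Qed.

Definition fX (X : {set 'I_9}) : nat -> bool := fun n => nth false [seq i \in X | i <- enum 'I_9] n.

Lemma fX_ord X (i : 'I_9) : fX X i = (i \in X).
Proof. by rewrite /fX (nth_map i) ?size_enum_ord ?ltn_ord // nth_ord_enum. Qed.

Lemma fX_nat X n : n < 9 -> fX X n = (inord n \in X).
Proof. by move=> Hn; rewrite -fX_ord inordK. Qed.

Lemma chkX P X : chk P -> P (fX X).
Proof. move=> /allP; apply; apply: allbl_mem; by rewrite size_map size_enum_ord. Qed.

Lemma cardQ (Q : pred 'I_9) (F : nat -> bool) :
  (forall i : 'I_9, Q i = F i) -> #|[set j : 'I_9 | Q j]| = cnt F.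
Proof.
move=> H; rewrite cardsE cardE /enum_mem size_filter -enumT /cnt /I9 -val_enum_ord count_map.
by apply: eq_count => i /=; rewrite -H.
Qed.

Lemma allI9 (p : pred nat) : all p I9 -> forall i : 'I_9, p i.
Proof. move=> /allP H i; apply: H; by rewrite mem_iota /= ltn_ord. Qed.

Lemma allI9' (p : pred nat) : (forall i : 'I_9, p i) -> all p I9.
Proof. move=> H; apply/allP=> n; rewrite mem_iota add0n => Hn. exact: (H (Ordinal Hn)). Qed.

Definition d123 d := [|| d == 1, d == 2 | d == 3].

Lemma attsetE d (i : 'I_9) : i \in attset d = attN d i.
Proof. by case: d => [|[|[|[|d]]]]; rewrite /attset ?inE. Qed.

Lemma dok d : d123 d -> forall b,
  [&& static d b, chk (Pdiss d b), chk (Pind d b) & chk (Pdlow d b)].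
Proof. by rewrite /d123 => /or3P [] /eqP -> [] ; vm_compute. Qed.

Lemma cardX (X : {set 'I_9}) : #|X| = cnt (fX X).
Proof.
have -> : X = [set j | j \in X] by apply/setP=> i; rewrite inE.
by apply: cardQ => i; rewrite fX_ord inE.
Qed.

Lemma cardXA d (X : {set 'I_9}) : #|X :&: attset d| = cnt (fun n => fX X n && attN d n).
Proof.
have -> : X :&: attset d = [set j | (j \in X) && (j \in attset d)] by apply/setP=> i; rewrite !inE.
by apply: cardQ => i; rewrite fX_ord attsetE.
Qed.

Lemma cardXdeg d b (X : {set 'I_9}) (i : 'I_9) :
  #|[set j in X | gadj d b i j]| = ldegN d b (fX X) i.
Proof. by apply: cardQ => j; rewrite fX_ord. Qed.

Lemma inrangeX d (X : {set 'I_9}) : (forall i, i \in X -> i < gsize d) -> inrange d (fX X).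
Proof. move=> H; apply: allI9' => i; rewrite fX_ord; apply/implyP; exact: H. Qed.

Section Local.
Variables (d : nat) (b : bool).
Hypothesis Hd : d123 d.

Lemma dokE : [/\ static d b, chk (Pdiss d b), chk (Pind d b) & chk (Pdlow d b)].
Proof. by have /and4P [] := @dok d Hd b. Qed.

Lemma LD (X : {set 'I_9}) :
  (forall i, i \in X -> i < gsize d) ->
  (forall i, i \in X -> #|[set j in X | gadj d b i j]| <= 1) ->
  [/\ #|X| <= base d + #|X :&: attset d|, #|X :&: attset d| <= 2 &
      (2 <= #|X :&: attset d| -> forall i, i \in X :&: attset d -> 0 < #|[set j in X | gadj d b i j]|)].
Proof.
move=> Hr Hdeg; have [_ H _ _] := dokE; have := chkX X H; rewrite /Pdiss => /implyP H0.
have /H0 : inrange d (fX X) && all (fun n => fX X n ==> (ldegN d b (fX X) n <= 1)) I9.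
  rewrite inrangeX //=.
  apply: (@allI9' (fun n => fX X n ==> (ldegN d b (fX X) n <= 1))) => i; rewrite fX_ord -cardXdeg; apply/implyP; exact: Hdeg.
rewrite -cardX -cardXA => /and3P [H1 H2 H3]; split => // H4 i; move: H3; rewrite H4 => /allI9 /(_ i).
by rewrite inE fX_ord attsetE cardXdeg => /implyP.
Qed.

Lemma LI (X : {set 'I_9}) :
  (forall i, i \in X -> i < gsize d) ->
  (forall i j, i \in X -> j \in X -> ~~ gadj d b i j) -> #|X| <= cc d.
Proof.
move=> Hr Hind; have [_ _ H _] := dokE; have := chkX X H; rewrite /Pind cardX => /implyP; apply.
rewrite inrangeX //.
apply: (@allI9' (fun n => fX X n ==> all (fun m => fX X m ==> ~~ gadjN d b n m) I9)) => i; rewrite fX_ord; apply/implyP => Hi; apply: (@allI9' (fun m => fX X m ==> ~~ gadjN d b i m)) => j; rewrite fX_ord.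
apply/implyP => Hj; exact: Hind.
Qed.

Definition baseset := [set i : 'I_9 | baseN d i].

Lemma LDL (A : {set 'I_9}) : A \subset attset d -> (#|A| = 1 \/ (#|A| = 2 /\ d != 1)) ->
  let X := baseset :|: A in
  (forall i, i \in X -> #|[set j in X | gadj d b i j]| <= 1) /\
  (#|A| = 1 -> forall i, i \in A -> #|[set j in X | gadj d b i j]| = 0).
Proof.
move=> HA Hc X; have [_ _ _ H] := dokE; have := chkX A H; rewrite /Pdlow => /implyP H0.
have /H0 : all (fun n => fX A n ==> attN d n) I9 && ((cnt (fX A) == 1) || ((cnt (fX A) == 2) && (d != 1))).
  apply/andP; split.
    by apply: (@allI9' (fun n => fX A n ==> attN d n)) => i; rewrite fX_ord -attsetE; apply/implyP => Hi; exact: (subsetP HA).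
  by rewrite -cardX; case: Hc => [->|[-> ->]].
rewrite -cardX.
have eX : forall i : 'I_9, (baseN d i || fX A i) = (i \in X) by move=> i; rewrite fX_ord !inE.
have eD : forall i : 'I_9, ldegN d b (fun n => baseN d n || fX A n) i = #|[set j in X | gadj d b i j]|.
  by move=> i; symmetry; apply: cardQ => j; rewrite eX.
move=> /andP [H1 H2]; split.
  by move=> i Hi; move: H1 => /allI9 /(_ i); rewrite eX Hi eD.
move=> H1A i Hi; move: H2; rewrite H1A eqxx => /allI9 /(_ i); rewrite fX_ord Hi eD.
by move/eqP.
Qed.

Lemma staticE :
  [/\ forall i : 'I_9, i < gsize d -> #|[set j | gadj d b i j]| + (i \in attset d) = 3,
      forall i j : 'I_9, gadj d b i j -> j < gsize d,
      forall i : 'I_9, i \in attset d -> i < gsize d,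
      forall i : 'I_9, ~~ gadj d b i i &
      forall i : 'I_9, i < gsize d -> i != 0 :> nat -> exists2 j : 'I_9, gadj d b i j & rk d j < rk d i].
Proof.
have [H _ _ _] := dokE; move: H => /and5P [H1 H2 H3 H4 /and4P [H5 _ _ _]]; split.
- move=> i Hi; apply/eqP; move: H1 => /allI9 /(_ i); rewrite Hi implyTb attsetE.
  by rewrite (@cardQ _ (gadjN d b i)).
- by move=> i j; move: H2 => /allI9 /(_ i) /allI9 /(_ j) /implyP.
- by move=> i; rewrite attsetE; move: H3 => /allI9 /(_ i) /implyP.
- by move=> i; move: H4 => /allI9 /(_ i).
- move=> i Hi Hi0; move: H5 => /allI9 /(_ i); rewrite Hi Hi0 implyTb => /hasP [j Hj /andP [Hg Hr]].
  move: Hj; rewrite mem_iota add0n => Hj; by exists (Ordinal Hj).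
Qed.

Lemma baseE : [/\ forall i : 'I_9, i \in baseset -> i < gsize d,
   forall i : 'I_9, i \in baseset -> i \notin attset d & #|baseset| = base d].
Proof.
have [H _ _ _] := dokE; move: H => /and5P [_ _ _ _ /and4P [_ H6 H7 _]]; split.
- by move=> i; rewrite inE; move: H6 => /allI9 /(_ i) /implyP H /H /andP [].
- by move=> i; rewrite inE attsetE; move: H6 => /allI9 /(_ i) /implyP H /H /andP [].
- by rewrite (cardQ (F := baseN d)) //; apply/eqP.
Qed.

Definition indset := [set i : 'I_9 | indN d i].

Lemma indE : [/\ forall i : 'I_9, i \in indset -> i < gsize d,
   forall i j : 'I_9, i \in indset -> j \in indset -> ~~ gadj d b i j,
   forall i : 'I_9, i \in indset -> i \notin attset d & d != 3 -> #|indset| = cc d].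
Proof.
have [H _ _ _] := dokE; move: H => /and5P [_ _ _ _ /and4P [_ _ _ /and4P [H1 H2 H3 H4]]]; split.
- by move=> i; rewrite inE; move: H1 => /allI9 /(_ i) /implyP.
- move=> i j; rewrite !inE => Hi Hj; move: H2 => /allI9 /(_ i); rewrite Hi implyTb => /allI9 /(_ j).
  by rewrite Hj.
- by move=> i; rewrite inE attsetE; move: H3 => /allI9 /(_ i) /implyP.
- move=> Hd3; move: H4; rewrite (negbTE Hd3) /= => /eqP <-; by apply: cardQ.
Qed.
End Local.

Lemma sum_ind (T : finType) (P : pred T) : \sum_(x : T) (P x : nat) = #|[set x | P x]|.
Proof.
rewrite -sum1_card [RHS]big_mkcond; apply: eq_bigr => x _; by rewrite inE; case: (P x).
Qed.

Lemma dcount (T U : finType) (R : T -> U -> bool) :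
  \sum_(x : T) #|[set y | R x y]| = \sum_(y : U) #|[set x | R x y]|.
Proof.
under eq_bigr do rewrite -sum_ind.
rewrite exchange_big /=; apply: eq_bigr => y _; by rewrite sum_ind.
Qed.

Lemma card_pairs (T : finType) (A : {set T * 'I_9}) :
  #|A| = \sum_(w : T) #|[set i | (w, i) \in A]|.
Proof.
rewrite -[LHS]sum1_card.
under [RHS]eq_bigr do rewrite -sum1_card.
rewrite pair_big_dep /=; apply: eq_bigl => -[x i]; by rewrite inE.
Qed.

Lemma sum_eq0 (T : finType) (F : T -> nat) : \sum_(x : T) F x = 0 -> forall x, F x = 0.
Proof. move=> /eqP; rewrite sum_nat_eq0 => /forallP H x; exact/eqP/H. Qed.

Lemma sumMl (T : finType) (a : nat) (F : T -> nat) : \sum_(x : T) (a * F x) = a * \sum_(x : T) F x.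
Proof. by rewrite big_distrr. Qed.

Lemma sum_sub2 (T : finType) (F : T -> bool) :
  \sum_(x : T) (2 - 2 * F x) = 2 * #|T| - 2 * \sum_(x : T) (F x : nat).
Proof.
have H : \sum_(x : T) ((2 - 2 * F x) + 2 * F x) = \sum_(x : T) 2.
  by apply: eq_bigr => x _; case: (F x).
rewrite big_split sumMl sum_nat_const /= in H.
have E1 : #|(xpredT : pred T)| = #|T| by apply: eq_card.
rewrite E1 in H; lia.
Qed.

Lemma sum3 (T : finType) (a b : nat) (F G H : T -> nat) :
  \sum_(x : T) (a * F x + b * G x + H x) = a * \sum_(x : T) F x + b * \sum_(x : T) G x + \sum_(x : T) H x.
Proof. by rewrite !big_split !sumMl. Qed.

Lemma sum2 (T : finType) (a : nat) (F G : T -> nat) :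
  \sum_(x : T) (a * F x + G x) = a * \sum_(x : T) F x + \sum_(x : T) G x.
Proof. by rewrite big_split sumMl. Qed.

Section H.
Variables (V E : finType) (src tgt : E -> V).
Hypothesis Hloop : loopless src tgt.
Local Notation hd := (hdeg src tgt).
Local Notation inc := (incident src tgt).

Definition other (w : V) (e : E) := if src e == w then tgt e else src e.

Lemma joinsE e w w' : joins src tgt e w w' = inc w e && (w' == other w e).
Proof.
rewrite /joins /incident /other; have Hl := Hloop e.
case: (src e =P w) => [<-|Hs] /=.
  by rewrite (eq_sym (tgt e) (src e)) (negbTE Hl) andbF orbF eq_sym.
by rewrite andbC (eq_sym w').
Qed.

Lemma joins_inc e w w' : joins src tgt e w w' -> inc w e.
Proof. by rewrite joinsE => /andP []. Qed.

Lemma joins_sym e w w' : joins src tgt e w w' = joins src tgt e w' w.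
Proof. by rewrite /joins orbC. Qed.

Lemma other_inc w e : inc w e -> inc (other w e) e.
Proof. by rewrite /incident /other; case: (src e =P w) => _ /=; rewrite eqxx ?orbT. Qed.

Lemma other_neq w e : inc w e -> other w e != w.
Proof.
rewrite /incident /other; have := Hloop e.
case: (src e =P w) => [<-|Hs] /=; first by rewrite eq_sym.
by move=> _ /eqP Ht; apply/eqP => Hs'; apply: Hs.
Qed.

Lemma other_other w e : inc w e -> other (other w e) e = w.
Proof.
rewrite /incident /other; have := Hloop e.
case: (src e =P w) => [<-|Hs] /= Hl; first by rewrite (negbTE Hl).
by rewrite eqxx => /eqP.
Qed.

Lemma joins_other w e : inc w e -> joins src tgt e w (other w e).
Proof. by move=> H; rewrite joinsE H eqxx. Qed.

Lemma inc2 e : #|[set w | inc w e]| = 2.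
Proof.
have -> : [set w | inc w e] = [set src e; tgt e].
  by apply/setP => w; rewrite !inE /incident !(eq_sym w).
by rewrite cards2 (Hloop e).
Qed.

Lemma handshake : \sum_(w : V) hd w = 2 * #|E|.
Proof.
rewrite /hdeg dcount; under eq_bigr do rewrite inc2.
by rewrite sum_nat_const cardT -cardT mulnC.
Qed.

Section HM.
Variables (M : {set E}) (o : E -> bool).
Hypothesis Hm : induced_matching src tgt M.

Lemma incM_le1 w : #|[set e | (e \in M) && inc w e]| <= 1.
Proof.
apply/card_le1_eqP => x y; rewrite !inE => /andP [Hx Hwx] /andP [Hy Hwy].
apply/eqP; apply/negPn/negP => Hne; have := (Hm.1 _ _ Hy Hx Hne w).
by rewrite Hwx Hwy.
Qed.

Lemma covered_card w : (covered src tgt M w : nat) = #|[set e | (e \in M) && inc w e]|.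
Proof.
have := incM_le1 w; rewrite /covered; case: existsP => [[e /andP [He Hwe]]|Hn].
  move=> H; apply/eqP; rewrite eqn_leq H andbT /=; apply/card_gt0P; exists e; by rewrite inE He.
move=> _; symmetry; apply: eq_card0 => e; rewrite !inE; apply/negP => H; apply: Hn; exists e.
by rewrite H.
Qed.

Lemma sum_cov : \sum_(w : V) (covered src tgt M w : nat) = 2 * #|M|.
Proof.
under eq_bigr do rewrite covered_card.
rewrite dcount.
have -> : \sum_(e : E) #|[set w | (e \in M) && inc w e]| = \sum_(e : E) ((e \in M) + (e \in M)).
  apply: eq_bigr => e _; case: (e \in M).
    by rewrite -[true + true]/2 -(inc2 e); congr (#|_|); apply/setP => w; rewrite !inE.
  by rewrite -[false + false]/0; apply/eqP; rewrite cards_eq0; apply/eqP/setP => w; rewrite !inE.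
rewrite big_split sum_ind /=.
have -> : [set x | x \in M] = M by apply/setP => x; rewrite inE.
by rewrite addnn -mul2n.
Qed.

Definition out w := #|[set e | (e \notin M) && outgoing src tgt o w e]|.

Lemma outgoing_inc w e : outgoing src tgt o w e -> inc w e.
Proof. by rewrite /outgoing /incident; case: (o e) => ->; rewrite ?orbT. Qed.

Lemma sum_out : \sum_(w : V) out w = #|E| - #|M|.
Proof.
rewrite /out dcount.
have -> : \sum_(e : E) #|[set w | (e \notin M) && outgoing src tgt o w e]| = \sum_(e : E) (e \notin M : nat).
  apply: eq_bigr => e _; case: (e \in M) => /=.
    by apply/eqP; rewrite cards_eq0; apply/eqP/setP => w; rewrite !inE.
  have -> : [set w | outgoing src tgt o w e] = [set (if o e then src e else tgt e)].
    by apply/setP => w; rewrite !inE /outgoing; case: (o e); rewrite eq_sym.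
  by rewrite cards1.
rewrite sum_ind; have <- := cardsC M.
have -> : [set x | x \notin M] = ~: M by apply/setP => x; rewrite !inE.
by rewrite addKn.
Qed.

Lemma joins_outgoing e w w' : joins src tgt e w w' -> outgoing src tgt o w e || outgoing src tgt o w' e.
Proof. by rewrite /joins /outgoing; case: (o e) => /orP [] /andP [H1 H2]; rewrite ?H1 ?H2 ?orbT. Qed.

Lemma joins_outgoing2 e w w' : joins src tgt e w w' -> outgoing src tgt o w e -> outgoing src tgt o w' e -> False.
Proof.
move=> Hj; have := Hloop e; move: Hj; rewrite /joins /outgoing.
by case: (o e) => /orP [] /andP [/eqP -> /eqP ->] Hl /eqP Ha /eqP Hb; move: Hl; rewrite ?Ha ?Hb eqxx.
Qed.
End HM.
End H.

Section K.
Variables (V E : finType) (src tgt : E -> V) (k : nat) (M : {set E}) (o : E -> bool).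
Hypothesis Hloop : loopless src tgt.
Hypothesis Hconn : hconnected src tgt.
Hypothesis Hdeg3 : forall w, hdeg src tgt w <= 3.
Hypothesis Heq : 3 * ncount src tgt 1 + 2 * ncount src tgt 2 + ncount src tgt 3 = 6 * k.
Hypothesis Hk : 0 < k.
Hypothesis Hm : induced_matching src tgt M.
Hypothesis HMk : #|M| = k.
Hypothesis Horient : forall w, ~~ covered src tgt M w -> out src tgt M o w = 2.
Local Notation hd := (hdeg src tgt).
Local Notation inc := (incident src tgt).

Lemma sum_cc : \sum_(w : V) cc (hd w) = 6 * k.
Proof.
rewrite -Heq.
have -> : \sum_(w : V) cc (hd w) = \sum_(w : V) (3 * (hd w == 1) + 2 * (hd w == 2) + (hd w == 3)).
  by apply: eq_bigr => w _; case: (hd w) => [|[|[|[|n]]]].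
have E1 := sum3 3 2 (fun w => (hd w == 1 : nat)) (fun w => (hd w == 2 : nat)) (fun w => (hd w == 3 : nat)).
by rewrite /= in E1; rewrite E1 !sum_ind.
Qed.

Lemma hd_pos w : 0 < hd w.
Proof.
rewrite lt0n; apply/negP => /eqP H0.
have Hall : forall v, v = w.
  move=> v; have /connectP [[|x p] Hp ->] := Hconn w v => //.
  move: Hp => /=.
  move=> /andP [/existsP [e He] _]; move: H0; rewrite /hdeg => /eqP; rewrite cards_eq0 => /eqP H0.
  have : e \in [set e | inc w e] by rewrite inE (joins_inc Hloop He).
  by rewrite H0 inE.
have Hn : forall i, 0 < i -> ncount src tgt i = 0.
  move=> i Hi; apply/eqP; rewrite cards_eq0; apply/eqP/setP => v; rewrite !inE (Hall v) H0.
  by case: i Hi.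
move: Heq; rewrite !Hn //; lia.
Qed.

Lemma Hd123 w : d123 (hd w).
Proof. have := hd_pos w; have := Hdeg3 w; rewrite /d123; case: (hd w) => [|[|[|[|n]]]] //. Qed.

Lemma outdeg0 w : covered src tgt M w -> out src tgt M o w = 0.
Proof.
have H1 := sum_out src tgt M o.
have H2 := handshake Hloop.
have H3 := sum_cov Hloop Hm.
have H4 : \sum_(w : V) (hd w + cc (hd w)) = 4 * #|V|.
  rewrite -sum1_card -sumMl; apply: eq_bigr => v _; move: (Hd123 v).
  by rewrite /d123 => /or3P [] /eqP ->.
rewrite big_split /= sum_cc H2 in H4.
have H5 : \sum_(w : V) out src tgt M o w =
   \sum_(w : V) (if covered src tgt M w then out src tgt M o w else 0) + \sum_(w : V) (2 - 2 * covered src tgt M w).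
  rewrite -big_split /=; apply: eq_bigr => v _; case: (boolP (covered src tgt M v)) => Hc.
    by rewrite muln1 subnn addn0.
  by rewrite Horient // muln0 subn0.
have H6 : \sum_(w : V) (2 - 2 * covered src tgt M w) = 2 * #|V| - 2 * (2 * #|M|).
  by rewrite -H3 sum_sub2.
move=> Hc; have HS : \sum_(w : V) (if covered src tgt M w then out src tgt M o w else 0) = 0.
  rewrite H6 in H5; rewrite H5 in H1; set nV := #|V| in H1 H4; set nE := #|E| in H1 H4; lia.
have := sum_eq0 HS w; by rewrite Hc.
Qed.
End K.

Section Gr.
Variables (V E : finType) (src tgt : E -> V).
Hypothesis Hloop : loopless src tgt.
Variables (att : V -> E -> 'I_9) (var : V -> bool).
Hypothesis Hatt : valid_attach src tgt att.
Hypothesis Hd : forall w, d123 (hdeg src tgt w).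
Local Notation hd := (hdeg src tgt).
Local Notation inc := (incident src tgt).
Local Notation Gv := (Gvert src tgt).
Local Notation G := (Gadj src tgt att var).
Local Notation oth := (other src tgt).

Lemma att_in w e : inc w e -> att w e \in attset (hd w).
Proof. exact: (Hatt w).1. Qed.

Lemma att_inj w e e' : inc w e -> inc w e' -> att w e = att w e' -> e = e'.
Proof. by move=> H1 H2; apply: (Hatt w).2.1. Qed.

Lemma att_surj w (i : 'I_9) : i \in attset (hd w) -> exists2 e, inc w e & att w e = i.
Proof.
move=> Hi; have := subsetP (Hatt w).2.2 i Hi => /imsetP [e He ->]; by exists e.
Qed.

Definition vp (p : V * 'I_9) := p.2 < gsize (hd p.1).
Definition mkv (p : V * 'I_9) (H : vp p) : Gv := exist _ p H.

Lemma vpv (v : Gv) : vp (val v). Proof. exact: (valP v). Qed.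

Lemma att_vp w e : inc w e -> vp (w, att w e).
Proof. move=> H; have [_ _ H3 _ _] := staticE (var w) (Hd w); exact: H3 (att_in H). Qed.

Definition ext (w w' : V) (i j : 'I_9) :=
  [exists e, joins src tgt e w w' && (att w e == i) && (att w' e == j)].

Lemma GE (u v : Gv) : G u v = (((val u).1 == (val v).1) && gadj (hd (val u).1) (var (val u).1) (val u).2 (val v).2)
   || ext (val u).1 (val v).1 (val u).2 (val v).2.
Proof. by []. Qed.

Lemma extE w w' i j e0 : inc w e0 -> att w e0 = i ->
  ext w w' i j = (w' == oth w e0) && (j == att (oth w e0) e0).
Proof.
move=> He0 Ha0; apply/existsP/andP => [[e /andP [/andP [Hj /eqP Hi] /eqP Hj']]|[/eqP Hw /eqP Hj]].
  have Hinc := joins_inc Hloop Hj; rewrite -Ha0 in Hi; have Ee := att_inj Hinc He0 Hi; subst e.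
  move: Hj; rewrite joinsE // => /andP [_ /eqP Hw]; subst w'; by rewrite Hj' !eqxx.
exists e0; rewrite Hw Hj Ha0 !eqxx joins_other //.
Qed.

Lemma ext_att w w' i j : ext w w' i j -> i \in attset (hd w).
Proof. by move=> /existsP [e /andP [/andP [Hj /eqP <-] _]]; apply: att_in; exact: joins_inc Hj. Qed.

Lemma ext_sym w w' i j : ext w w' i j = ext w' w j i.
Proof.
apply/existsP/existsP => -[e He]; exists e; move: He; rewrite joins_sym.
  by case/andP => /andP [-> ->] ->.
by case/andP => /andP [-> ->] ->.
Qed.

Lemma Gsym : symmetric G.
Proof.
move=> u v; rewrite !GE ext_sym eq_sym; congr (_ || _).
case: eqP => //= ->; by rewrite /gadj orbC.
Qed.

Lemma cubicG : cubic G.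
Proof.
move=> x; case Ex: (val x) => [w i]; have Hx' : i < gsize (hd w) by have := vpv x; rewrite Ex.
have [S1 S2 S3 S4 S5] := staticE (var w) (Hd w).
rewrite -(card_imset _ val_inj).
set A1 := [set (w, j) | j in [set j | gadj (hd w) (var w) i j]].
have HA1 : #|A1| = #|[set j | gadj (hd w) (var w) i j]| by apply: card_imset => a b [].
case: (boolP (i \in attset (hd w))) => Hi.
  have [e0 He0 Ha0] := att_surj Hi.
  set q := (oth w e0, att (oth w e0) e0).
  have -> : [set val y | y in [set y | G x y]] = A1 :|: [set q].
    apply/setP => -[w' j]; rewrite !inE; apply/imsetP/orP => [[y]|].
      rewrite inE GE Ex /= => /orP [/andP [/eqP Hw Hg]|He] ->; [left|right].
        by apply/imsetP; exists (val y).2; rewrite ?inE // Hw -surjective_pairing.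
      rewrite (extE _ _ He0 Ha0) in He; case/andP: He => /eqP H1 /eqP H2.
      by rewrite [val y]surjective_pairing H1 H2.
    case=> [/imsetP [j' Hj' [-> ->]]|/eqP [-> ->]].
      move: Hj'; rewrite inE => Hj'.
      exists (@mkv (w, j') (S2 _ _ Hj')) => //; by rewrite inE GE Ex /= eqxx Hj'.
    exists (@mkv q (att_vp (other_inc He0))) => //; rewrite inE GE Ex /=.
    by rewrite (extE _ _ He0 Ha0) !eqxx orbT.
  rewrite cardsU cards1 HA1.
  have -> : A1 :&: [set q] = set0.
    apply/setP => p; rewrite !inE; apply/negP => /andP [/imsetP [j _ ->] /eqP Hq].
    by move: Hq; rewrite /q => -[Hw _]; move: (other_neq Hloop He0); rewrite -Hw eqxx.
  rewrite cards0 subn0; have := S1 i Hx'; rewrite Hi; lia.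
have -> : [set val y | y in [set y | G x y]] = A1.
  apply/setP => -[w' j]; apply/imsetP/imsetP => [[y]|[j' Hj' [-> ->]]].
    rewrite inE GE Ex /= => /orP [/andP [/eqP Hw Hg]|He] ->.
      by exists (val y).2; rewrite ?inE // Hw -surjective_pairing.
    by move: (ext_att He); rewrite (negbTE Hi).
  move: Hj'; rewrite inE => Hj'.
  exists (@mkv (w, j') (S2 _ _ Hj')) => //; by rewrite inE GE Ex /= eqxx Hj'.
rewrite HA1; have := S1 i Hx'; rewrite (negbTE Hi); lia.
Qed.

Lemma gsize_pos w : 0 < gsize (hd w).
Proof. by move: (Hd w); rewrite /d123 => /or3P [] /eqP ->. Qed.

Lemma conn_root n (x y : Gv) : rk (hd (val x).1) (val x).2 < n -> (val y).1 = (val x).1 ->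
  nat_of_ord (val y).2 = 0 -> connect G x y.
Proof.
elim: n x => [|n IH] x //; case Ex: (val x) => [w i] /= Hr Hy1 Hy2.
case: (eqVneq (nat_of_ord i) 0) => Hi.
  have -> : x = y by apply: val_inj; rewrite Ex [val y]surjective_pairing Hy1; congr pair; apply: val_inj; rewrite /= Hy2 Hi.
  exact: connect0.
have [S1 S2 S3 S4 S5] := staticE (var w) (Hd w).
have Hx : i < gsize (hd w) by have := vpv x; rewrite Ex.
have [j Hj Hrk] := S5 i Hx Hi.
set z := @mkv (w, j) (S2 _ _ Hj).
have Hxz : G x z by rewrite GE Ex /= eqxx Hj.
apply: connect_trans (connect1 Hxz) _; apply: IH => //=; lia.
Qed.

Lemma Gcsym : connect_sym G.
Proof. exact: sym_connect_sym Gsym. Qed.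

Lemma conn_local (x y : Gv) : (val x).1 = (val y).1 -> connect G x y.
Proof.
move=> Hxy; set r := @mkv ((val x).1, @ord0 8) (gsize_pos (val x).1).
have Hxr : connect G x r by apply: (@conn_root (rk (hd (val x).1) (val x).2).+1).
have Hyr : connect G y r by apply: (@conn_root (rk (hd (val y).1) (val y).2).+1) => //=; rewrite Hxy.
by apply: connect_trans Hxr _; rewrite Gcsym.
Qed.

Lemma connG : hconnected src tgt -> gconnected G.
Proof.
move=> Hc x y; have /connectP [p Hp Hl] := Hc (val x).1 (val y).1.
elim: p x Hp Hl => [|w1 p IH] x /= Hp Hl; first by apply: conn_local.
case/andP: Hp => /existsP [e He] Hp.
move: He; rewrite joinsE // => /andP [Hinc /eqP Hw1]; subst w1.
set a := @mkv ((val x).1, att (val x).1 e) (att_vp Hinc).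
set b := @mkv (oth (val x).1 e, att (oth (val x).1 e) e) (att_vp (other_inc Hinc)).
have Hab : G a b by rewrite GE /= (extE _ _ Hinc (erefl _)) !eqxx orbT.
apply: connect_trans (conn_local (x := x) (y := a) (erefl _)) _.
apply: connect_trans (connect1 Hab) _; exact: IH.
Qed.

Definition loc (S : {set Gv}) (w : V) : {set 'I_9} := [set i | (w, i) \in [set val v | v in S]].

Lemma cardS (S : {set Gv}) : #|S| = \sum_(w : V) #|loc S w|.
Proof. by rewrite -(card_imset _ val_inj) card_pairs. Qed.

Lemma loc_mem (S : {set Gv}) (v : Gv) : v \in S -> (val v).2 \in loc S (val v).1.
Proof. by move=> Hv; rewrite inE -surjective_pairing; apply: imset_f. Qed.

Lemma loc_inv (S : {set Gv}) w i : i \in loc S w -> exists2 v, v \in S & val v = (w, i).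
Proof. by rewrite inE => /imsetP [v Hv ->]; exists v. Qed.

Lemma loc_vp (S : {set Gv}) w i : i \in loc S w -> i < gsize (hd w).
Proof. by move=> /loc_inv [v _ Hv]; have := vpv v; rewrite Hv. Qed.

Definition mkS (F : V -> {set 'I_9}) : {set Gv} := [set v | (val v).2 \in F (val v).1].

Lemma loc_mkS (F : V -> {set 'I_9}) w : (forall i, i \in F w -> i < gsize (hd w)) -> loc (mkS F) w = F w.
Proof.
move=> HF; apply/setP => i; apply/idP/idP.
  by move=> /loc_inv [v]; rewrite inE => Hv Ev; move: Hv; rewrite Ev.
move=> Hi; have Hp : vp (w, i) by exact: HF.
by rewrite inE; apply/imsetP; exists (mkv Hp); rewrite // inE.
Qed.

Definition Qs (S : {set Gv}) w (i : 'I_9) :=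
  [set e | inc w e && (att w e == i) && (att (oth w e) e \in loc S (oth w e))].

Lemma Qs_le1 S w i : #|Qs S w i| <= 1.
Proof.
apply/card_le1_eqP => e e'; rewrite !inE => /andP [/andP [H1 /eqP H2] _] /andP [/andP [H1' /eqP H2'] _].
by apply: (att_inj H1' H1); rewrite H2 H2'.
Qed.

Lemma nbr_card (S : {set Gv}) (x : Gv) w i : val x = (w, i) ->
  #|[set y in S | G x y]| = #|[set j in loc S w | gadj (hd w) (var w) i j]| + #|Qs S w i|.
Proof.
move=> Ex; rewrite -(card_imset _ val_inj).
set A := [set (w, j) | j in [set j in loc S w | gadj (hd w) (var w) i j]].
set B := [set (oth w e, att (oth w e) e) | e in Qs S w i].
have HA : #|A| = #|[set j in loc S w | gadj (hd w) (var w) i j]| by apply: card_imset => a b [].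
have HB : #|B| = #|Qs S w i|.
  apply: card_in_imset => e e'; rewrite !inE => /andP [/andP [H1 /eqP H2] _] /andP [/andP [H1' /eqP H2'] _] _.
  by apply: (att_inj H1 H1'); rewrite H2 H2'.
have -> : [set val y | y in [set y in S | G x y]] = A :|: B.
  apply/setP => -[w' j]; rewrite inE; apply/imsetP/orP => [[y]|].
    rewrite inE GE Ex /= => /andP [Hy /orP [/andP [/eqP Hw Hg]|He]] ->; [left|right].
      apply/imsetP; exists (val y).2; last by rewrite Hw -surjective_pairing.
      by rewrite inE Hg andbT Hw; apply: loc_mem.
    case/existsP: He => e /andP [/andP [Hj /eqP Hi] /eqP Hj'].
    have Hinc := joins_inc Hloop Hj; move: Hj; rewrite joinsE // => /andP [_ /eqP Hw].
    apply/imsetP; exists e; last by rewrite [val y]surjective_pairing Hw -Hj' Hw.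
    by rewrite inE Hinc Hi eqxx -Hw Hj'; apply: loc_mem.
  case=> [/imsetP [j' Hj' [-> ->]]|/imsetP [e He [-> ->]]].
    move: Hj'; rewrite inE => /andP [/loc_inv [v Hv Ev] Hg].
    by exists v; rewrite // inE Hv GE Ex Ev /= eqxx Hg.
  move: (He); rewrite inE => /andP [/andP [Hinc /eqP Hi] /loc_inv [v Hv Ev]].
  exists v; rewrite // inE Hv GE Ex Ev /= (extE _ _ Hinc Hi) !eqxx; by rewrite orbT.
rewrite cardsU HA HB.
have -> : A :&: B = set0.
  apply/setP => p; rewrite !inE; apply/negP => /andP [/imsetP [j _ ->] /imsetP [e He [Hw _]]].
  move: He; rewrite inE => /andP [/andP [Hinc _] _].
  by move: (other_neq Hloop Hinc); rewrite -Hw eqxx.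
by rewrite cards0 subn0.
Qed.

Variables (k : nat) (M : {set E}) (o : E -> bool).
Hypothesis Hm : induced_matching src tgt M.
Hypothesis HMk : #|M| = k.
Hypothesis Horient : forall w, ~~ covered src tgt M w -> out src tgt M o w = 2.
Hypothesis Hout0 : forall w, covered src tgt M w -> out src tgt M o w = 0.
Hypothesis Hsumcc : \sum_(w : V) cc (hd w) = 6 * k.
Local Notation cov := (covered src tgt M).
Local Notation outg := (outgoing src tgt o).

Lemma not_sub_ex (T : finType) (A B : {set T}) : #|A| < #|B| -> exists2 x, x \in B & x \notin A.
Proof.
move=> H; apply/subsetPn; apply/negP => Hs; move: (subset_leq_card Hs); by rewrite leqNgt H.
Qed.

Lemma uncov_notM w e : ~~ cov w -> inc w e -> e \notin M.
Proof. move=> Hc Hi; apply/negP => HM; move: Hc; rewrite /covered; case/negP; apply/existsP; exists e; by rewrite HM. Qed.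

Lemma alpha_le (S : {set Gv}) : independent G S -> #|S| <= 6 * k.
Proof.
move=> HS; rewrite cardS -Hsumcc; apply: leq_sum => w _; apply: (LI (b := var w) (Hd w)).
  by move=> i; apply: loc_vp.
move=> i j /loc_inv [v1 H1 E1] /loc_inv [v2 H2 E2].
move: HS => /forall_inP /(_ v1 H1) /forall_inP /(_ v2 H2); rewrite GE E1 E2 /= eqxx /=.
by apply: contra => ->.
Qed.

Definition e3 w := [pick e | inc w e && (e \notin M) && ~~ outg w e].

Lemma e3_some w : hd w = 3 -> exists e, e3 w = Some e.
Proof.
move=> H3; rewrite /e3; case: pickP => [e _|Hn]; first by exists e.
exfalso; have HB : #|[set e | inc w e]| = 3 by [].
case: (boolP (cov w)) => Hc.
  have Hle := incM_le1 Hm w.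
  have [e He HnA] := @not_sub_ex _ [set e | (e \in M) && inc w e] [set e | inc w e] ltac:(rewrite HB; lia).
  move: He HnA; rewrite !inE => He; rewrite He andbT => HnM.
  have := Hn e; rewrite He HnM /= => /negbFE Ho.
  have := Hout0 Hc; rewrite /out => /eqP; rewrite cards_eq0 => /eqP /setP /(_ e).
  by rewrite !inE HnM Ho.
have [e He HnA] := @not_sub_ex _ [set e | (e \notin M) && outg w e] [set e | inc w e] ltac:(rewrite HB; have := Horient Hc; rewrite /out => ->; lia).
move: He HnA; rewrite !inE => He; rewrite (uncov_notM Hc He) /= => Ho.
by have := Hn e; rewrite He (uncov_notM Hc He) Ho.
Qed.

Lemma e3P w e : e3 w = Some e -> [/\ inc w e, e \notin M & ~~ outg w e].
Proof. by rewrite /e3; case: pickP => [e' /andP [/andP [H1 H2] H3] [<-]|]. Qed.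

Definition Find w : {set 'I_9} :=
  if hd w == 3 then (if e3 w is Some e then [set att w e] else set0) else indset (hd w).

Lemma Find_vp w i : i \in Find w -> i < gsize (hd w).
Proof.
rewrite /Find; case: eqP => H3.
  case E3: (e3 w) => [e|]; rewrite ?inE // => /eqP ->; have [He _ _] := e3P E3.
  exact: att_vp He.
by have [H _ _ _] := indE (var w) (Hd w); apply: H.
Qed.

Lemma Find_card w : #|Find w| = cc (hd w).
Proof.
rewrite /Find; case: eqP => H3.
  by have [e E3] := e3_some H3; rewrite E3 cards1 H3.
have [_ _ _ H] := indE (var w) (Hd w); apply: H; exact/eqP.
Qed.

Lemma Find_att w i : i \in Find w -> i \in attset (hd w) -> exists e, e3 w = Some e /\ i = att w e.
Proof.
rewrite /Find; case: eqP => H3.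
  case E3: (e3 w) => [e|]; rewrite ?inE // => /eqP -> _; by exists e.
by have [_ _ H _] := indE (var w) (Hd w); move=> /H /negbTE ->.
Qed.

Lemma Find_int w i j : i \in Find w -> j \in Find w -> ~~ gadj (hd w) (var w) i j.
Proof.
have [_ _ _ S4 _] := staticE (var w) (Hd w).
rewrite /Find; case: eqP => H3.
  by case E3: (e3 w) => [e|]; rewrite ?inE // => /eqP -> /eqP ->.
by have [_ H _ _] := indE (var w) (Hd w); apply: H.
Qed.

Lemma alpha_ind : independent G (mkS Find).
Proof.
apply/forall_inP => u; rewrite inE => Hu; apply/forall_inP => v; rewrite inE => Hv.
rewrite GE negb_or; apply/andP; split.
  by apply/negP => /andP [/eqP Ew Hg]; move: Hv; rewrite -Ew => Hv; move: (Find_int Hu Hv); rewrite Hg.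
apply/negP => He; have Hai := ext_att He; rewrite ext_sym in He; have Haj := ext_att He; rewrite ext_sym in He.
have [e [E3 Ei]] := Find_att Hu Hai; have [f [F3 Fj]] := Find_att Hv Haj.
have [He1 _ Ho1] := e3P E3; have [Hf1 _ Ho2] := e3P F3.
case/existsP: He => g /andP [/andP [Hj /eqP Hgi] /eqP Hgj].
have Hg1 := joins_inc Hloop Hj; rewrite joins_sym in Hj; have Hg2 := joins_inc Hloop Hj.
have Eg : g = e by apply: (att_inj Hg1 He1); rewrite Hgi.
have Fg : g = f by apply: (att_inj Hg2 Hf1); rewrite Hgj.
subst g; subst f; move: (joins_outgoing o Hj); by rewrite (negbTE Ho1) (negbTE Ho2).
Qed.

Lemma alphaE : alpha G = 6 * k.
Proof.
apply/eqP; rewrite eqn_leq; apply/andP; split.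
  by apply/bigmax_leqP => S HS; apply: alpha_le.
have -> : 6 * k = #|mkS Find|.
  rewrite cardS -Hsumcc; apply: eq_bigr => w _; by rewrite loc_mkS ?Find_card // => i; apply: Find_vp.
rewrite /alpha; exact: (leq_bigmax_cond (F := fun S : {set Gv} => #|S|) _ alpha_ind).
Qed.

Definition Pw w := [set e | inc w e && (if cov w then e \in M else outg w e)].
Definition Fd w : {set 'I_9} := baseset (hd w) :|: [set att w e | e in Pw w].

Lemma Pw_inc w e : e \in Pw w -> inc w e.
Proof. by rewrite inE => /andP []. Qed.

Lemma Pw_card w : #|Pw w| + cov w = 2.
Proof.
case: (boolP (cov w)) => Hc.
  have -> : Pw w = [set e | (e \in M) && inc w e] by apply/setP => e; rewrite !inE Hc andbC.
  by rewrite -(covered_card Hm) Hc.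
have -> : Pw w = [set e | (e \notin M) && outg w e].
  apply/setP => e; rewrite !inE (negbTE Hc); apply/andP/andP => [[Hi Ho]|[_ Ho]].
    by rewrite (uncov_notM Hc Hi).
  by rewrite (outgoing_inc Ho).
by rewrite -/(out src tgt M o w) Horient.
Qed.

Lemma deg1_cov w : hd w = 1 -> cov w.
Proof.
move=> H1; case: (boolP (cov w)) => // Hc; exfalso; have := Horient Hc; rewrite /out => H2.
have : [set e | (e \notin M) && outg w e] \subset [set e | inc w e].
  by apply/subsetP => e; rewrite !inE => /andP [_ /outgoing_inc].
move/subset_leq_card; rewrite H2; by move: H1; rewrite /hdeg => ->.
Qed.

Lemma Aw_card w : #|[set att w e | e in Pw w]| = #|Pw w|.
Proof. by apply: card_in_imset => e e' /Pw_inc H1 /Pw_inc H2; apply: att_inj. Qed.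

Lemma Aw_sub w : [set att w e | e in Pw w] \subset attset (hd w).
Proof. by apply/subsetP => i /imsetP [e /Pw_inc He ->]; apply: att_in. Qed.

Lemma Fd_card w : #|Fd w| = base (hd w) + #|Pw w|.
Proof.
have [B1 B2 B3] := baseE (var w) (Hd w).
rewrite cardsU Aw_card B3.
have -> : baseset (hd w) :&: [set att w e | e in Pw w] = set0.
  apply/setP => i; rewrite inE [i \in set0]inE; apply/negP => /andP [Hb Ha]; move: (B2 _ Hb).
  by rewrite (subsetP (Aw_sub w) i Ha).
by rewrite cards0 subn0.
Qed.

Lemma Fd_vp w i : i \in Fd w -> i < gsize (hd w).
Proof.
have [B1 B2 B3] := baseE (var w) (Hd w).
rewrite inE => /orP [/B1 //|/imsetP [e /Pw_inc He ->]]; exact: att_vp He.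
Qed.

Lemma Fd_attP w e : inc w e -> att w e \in Fd w -> e \in Pw w.
Proof.
move=> He; have [B1 B2 B3] := baseE (var w) (Hd w).
rewrite inE => /orP [/B2|/imsetP [e' He' Ee]]; first by rewrite att_in.
by rewrite (att_inj He (Pw_inc He') Ee).
Qed.

Lemma Fd_sum : \sum_(w : V) #|Fd w| = 10 * k.
Proof.
have H : \sum_(w : V) (#|Fd w| + cov w) = \sum_(w : V) (2 * cc (hd w)).
  apply: eq_bigr => w _; rewrite Fd_card -addnA Pw_card.
  by move: (Hd w); rewrite /d123 => /or3P [] /eqP ->.
rewrite big_split sumMl Hsumcc /= (sum_cov Hloop Hm) HMk in H.
apply/eqP; rewrite -(eqn_add2r (2 * k)) H; apply/eqP; lia.
Qed.

Lemma diss_mk : dissociation G (mkS Fd).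
Proof.
have HF : forall w, loc (mkS Fd) w = Fd w by move=> w; apply: loc_mkS => i; apply: Fd_vp.
apply/forall_inP => x; rewrite inE => Hx; case Ex: (val x) => [w i].
rewrite (nbr_card _ Ex) HF; rewrite Ex /= in Hx.
have HA := Aw_sub w.
have Hc1 : #|[set att w e | e in Pw w]| = 1 \/ (#|[set att w e | e in Pw w]| = 2 /\ hd w != 1).
  rewrite Aw_card; have := Pw_card w; case: (boolP (cov w)) => Hc /=.
    by rewrite addn1 => -[]; left.
  rewrite addn0 => ->; right; split => //; apply/eqP => H1; move: Hc; by rewrite deg1_cov.
have [L1 L2] := LDL (var w) (Hd w) HA Hc1.
case: (eqVneq #|Qs (mkS Fd) w i| 0) => HQ.
  by rewrite HQ addn0; apply: L1.
have [e] : exists e, e \in Qs (mkS Fd) w i by apply/set0Pn; rewrite -cards_eq0.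
rewrite inE HF => /andP [/andP [Hinc /eqP Hi] Ho].
have He1 : e \in Pw w by apply: Fd_attP; rewrite // Hi.
have He2 : e \in Pw (oth w e) by apply: Fd_attP; rewrite // other_inc.
have Hj := joins_other Hloop Hinc.
have Hcw : cov w.
  case: (boolP (cov w)) => // Hc; exfalso; move: He1; rewrite inE (negbTE Hc) => /andP [_ Hout].
  have HnM := uncov_notM Hc Hinc.
  move: He2; rewrite inE; case: (cov (oth w e)) => /andP [_ H]; first by rewrite H in HnM.
  exact: (joins_outgoing2 Hloop Hj Hout H).
rewrite (L2 _ i) ?add0n ?Qs_le1 //.
  by rewrite Aw_card; have := Pw_card w; rewrite Hcw addn1 => -[].
by apply/imsetP; exists e.
Qed.

Lemma diss_ge : 10 * k <= diss G.
Proof.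
have -> : 10 * k = #|mkS Fd|.
  rewrite cardS -Fd_sum; apply: eq_bigr => w _; by rewrite loc_mkS // => i; apply: Fd_vp.
rewrite /diss; exact: (leq_bigmax_cond (F := fun S : {set Gv} => #|S|) _ diss_mk).
Qed.

Lemma inc_two x w e : inc x e -> inc w e -> x = w \/ x = oth w e.
Proof.
rewrite /incident /other; case: (src e =P w) => [<-|Hs] /=.
  by case/orP => /eqP ->; [left|right].
move=> Hx /eqP Ht; case/orP: Hx => /eqP <-; [right|left] => //.
Qed.

Section DissUp.
Variable D : {set Gv}.
Hypothesis HD : dissociation G D.
Local Notation X := (loc D).
Local Notation int w i := #|[set j in X w | gadj (hd w) (var w) i j]|.

Lemma Hdis w i : i \in X w -> int w i + #|Qs D w i| <= 1.
Proof.
move=> /loc_inv [v Hv Ev]; rewrite -(nbr_card _ Ev).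
by move: HD => /forall_inP /(_ v Hv).
Qed.

Definition tset w := [set e | inc w e && (att w e \in X w)].
Definition h0set w := [set e | inc w e && (att w e \notin X w)].
Definition Q1set w := [set e | (2 <= #|tset w|) && (e \in tset w)].

Lemma tA w : #|X w :&: attset (hd w)| = #|tset w|.
Proof.
have -> : X w :&: attset (hd w) = [set att w e | e in tset w].
  apply/setP => i; rewrite inE; apply/andP/imsetP => [[Hi Ha]|[e He ->]].
    have [e He Ee] := att_surj Ha; exists e => //; by rewrite inE He Ee Hi.
  by move: He; rewrite inE => /andP [He Hx]; rewrite Hx att_in.
by apply: card_in_imset => e e'; rewrite !inE => /andP [H1 _] /andP [H2 _]; apply: att_inj.
Qed.

Lemma th w : #|tset w| + #|h0set w| = hd w.
Proof.
rewrite /hdeg -(cardsID [set e | att w e \in X w] [set e | inc w e]).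
have -> : tset w = [set e | inc w e] :&: [set e | att w e \in X w] by apply/setP => e; rewrite !inE.
have -> // : h0set w = [set e | inc w e] :\: [set e | att w e \in X w].
by apply/setP => e; rewrite !inE andbC.
Qed.

Lemma edge0 w e : inc w e -> att w e \in X w -> att (oth w e) e \in X (oth w e) -> int w (att w e) = 0.
Proof.
move=> Hinc H1 H2; have := Hdis H1.
have : 0 < #|Qs D w (att w e)| by apply/card_gt0P; exists e; rewrite inE Hinc eqxx H2.
lia.
Qed.

Lemma loc_range w i : i \in X w -> i < gsize (hd w).
Proof. exact: loc_vp. Qed.

Lemma LDw w : [/\ #|X w| <= base (hd w) + #|tset w|, #|tset w| <= 2 &
      (2 <= #|tset w| -> forall e, e \in tset w -> 0 < int w (att w e))].
Proof.
have [L1 L2 L3] := LD (b := var w) (Hd w) (@loc_range w) (fun i Hi => leq_trans (leq_addr _ _) (Hdis Hi)).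
rewrite -tA; split => // H2 e; rewrite inE => /andP [He Hx]; apply: L3 => //.
by rewrite inE Hx att_in.
Qed.

Lemma vertex_ineq w : 3 * #|X w| + #|h0set w| <= 5 * cc (hd w) + #|Q1set w|.
Proof.
have [L1 L2 _] := LDw w; have Hth := th w.
have HQ : #|Q1set w| = if 2 <= #|tset w| then #|tset w| else 0.
  case: ifP => H; last by apply/eqP; rewrite cards_eq0; apply/eqP/setP => e; rewrite !inE H.
  by have -> : Q1set w = tset w by apply/setP => e; rewrite [e \in Q1set w]inE H.
have Hcc : 3 * base (hd w) + hd w + 2 = 5 * cc (hd w).
  by move: (Hd w); rewrite /d123 => /or3P [] /eqP ->.
rewrite HQ; case: ifP => H; lia.
Qed.

Lemma edge_ineq e : #|[set w | e \in Q1set w]| <= #|[set w | e \in h0set w]|.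
Proof.
case: (set_0Vmem [set w | e \in Q1set w]) => [->|[w]]; first by rewrite cards0.
rewrite inE => HQw; have He : e \in tset w by move: HQw; rewrite inE => /andP [].
have Ht : 2 <= #|tset w| by move: HQw; rewrite inE => /andP [].
have [Hinc Hx] : inc w e /\ att w e \in X w by move: He; rewrite inE => /andP [].
have [_ _ L3] := LDw w.
have Hw' : att (oth w e) e \notin X (oth w e).
  apply/negP => Hy; have := L3 Ht e He; by rewrite (edge0 Hinc Hx Hy).
have H1 : #|[set w | e \in Q1set w]| <= 1.
  rewrite -(cards1 w); apply: subset_leq_card; apply/subsetP => x; rewrite inE => Hq.
  have Htx : e \in tset x by move: Hq; rewrite inE => /andP [].
  have [Hix Hxx] : inc x e /\ att x e \in X x by move: Htx; rewrite inE => /andP [].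
  case: (inc_two Hix Hinc) => Ex; first by rewrite Ex inE.
  by rewrite Ex (negbTE Hw') in Hxx.
have H2 : 1 <= #|[set w | e \in h0set w]|.
  apply/card_gt0P; exists (oth w e); rewrite inE; rewrite [_ \in h0set _]inE (other_inc Hinc); exact: Hw'.
lia.
Qed.

Lemma diss_le : #|D| <= 10 * k.
Proof.
have H : \sum_(w : V) (3 * #|X w| + #|h0set w|) <= \sum_(w : V) (5 * cc (hd w) + #|Q1set w|).
  by apply: leq_sum => w _; apply: vertex_ineq.
have HQ : \sum_(w : V) #|Q1set w| <= \sum_(w : V) #|h0set w|.
  have E1 := dcount (fun w e => e \in Q1set w); have E2 := dcount (fun w e => e \in h0set w).
  rewrite /= in E1 E2.
  rewrite (eq_bigr (fun w => #|[set e | e \in Q1set w]|)); last by move=> w _; apply: eq_card => e; rewrite inE.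
  rewrite [X in _ <= X](eq_bigr (fun w => #|[set e | e \in h0set w]|)); last by move=> w _; apply: eq_card => e; rewrite inE.
  rewrite E1 E2; apply: leq_sum => e _; exact: edge_ineq.
have E3 := sum2 3 (fun w => #|X w|) (fun w => #|h0set w|).
have E4 := sum2 5 (fun w => cc (hd w)) (fun w => #|Q1set w|).
rewrite /= in E3 E4; rewrite E3 E4 Hsumcc in H.
rewrite cardS; set a := \sum_(w : V) #|X w| in H *.
set b := \sum_(w : V) #|h0set w| in H HQ; set c := \sum_(w : V) #|Q1set w| in H HQ.
lia.
Qed.
End DissUp.
End Gr.

Unset Implicit Arguments.

Theorem lemma1 :
  forall (k : nat), 0 < k ->
  forall (V E : finType) (src tgt : E -> V),
    in_Hk src tgt k ->
  forall (att : V -> E -> 'I_9) (var : V -> bool),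
    valid_attach src tgt att ->
    let G := Gadj src tgt att var in
    [/\ gconnected G, cubic G, alpha G = 6 * k & diss G = 10 * k].
Proof.
move=> k Hk V E src tgt [Hloop [Hconn [Hdeg3 [Heq [M [Hm HMk Hcov1 [o Horient]]]]]]] att var Hatt G.
have Hd := Hd123 Hloop Hconn Hdeg3 Heq Hk HMk.
have Hout0 := outdeg0 Hloop Hconn Hdeg3 Heq Hk Hm HMk Horient.
have Hsumcc := sum_cc Heq.
split.
- have H1 := connG Hloop var Hatt Hd Hconn. exact: H1.
- have H2 := cubicG Hloop var Hatt Hd. exact: H2.
- have H3 := alphaE Hloop var Hatt Hd Hm HMk Horient Hout0 Hsumcc. exact: H3.
- apply/eqP; rewrite eqn_leq (diss_ge Hloop var Hatt Hd Hm HMk Horient Hsumcc) andbT.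
  apply/bigmax_leqP => D HD; have H4 := @diss_le _ _ _ _ Hloop att var Hatt Hd k M HMk Hsumcc D HD; exact: H4.
Qed.
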